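(* Let $d\ge3$, let $V$ be a $d\times d$ correlation matrix (symmetric positive semi-definite with unit diagonal), let $X=(X_1,\dots,X_d)\sim N(0,V)$, and let $h(x)=\max_{1\le i\le d}x_i$. Then $E(h(X)^2)\le 6\ln d$ and $\mathrm{Var}(h(X))\ge d^{-15}/\sqrt{2\pi}$. *)

(* Defs.v *)
From Stdlib Require Import Reals.
Open Scope R_scope.

(* Vectors of R^d are represented as functions nat -> R (coordinates 0..d-1),
   d x d matrices as nat -> nat -> R. *)

Fixpoint rsum (n : nat) (f : nat -> R) : R :=
  match n with
  | O => 0
  | S m => rsum m f + f m
  end.

Fixpoint rprod (n : nat) (f : nat -> R) : R :=
  match n with
  | O => 1
  | S m => rprod m f * f m
  end.

(* h(x) = max_{0 <= i < d} x_i  (meaningful for d >= 1) *)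
Fixpoint vmax (n : nat) (x : nat -> R) : R :=
  match n with
  | O => x O
  | S m => Rmax (vmax m x) (x m)
  end.

Definition matvec (d : nat) (A : nat -> nat -> R) (z : nat -> R) : nat -> R :=
  fun i => rsum d (fun k => A i k * z k).

Definition correlation_matrix (d : nat) (V : nat -> nat -> R) : Prop :=
  (forall i j, (i < d)%nat -> (j < d)%nat -> V i j = V j i) /\
  (forall x : nat -> R, 0 <= rsum d (fun i => rsum d (fun j => x i * V i j * x j))) /\
  (forall i, (i < d)%nat -> V i i = 1).

Definition std_gauss_density (d : nat) (z : nat -> R) : R :=
  rprod d (fun i => exp (- (z i)^2 / 2) / sqrt (2 * PI)).

Definition improper_int (g : R -> R) (I : R) : Prop :=
  forall eps, 0 < eps -> exists M, forall a b, a <= -M -> M <= b ->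
    exists pr : Riemann_integrable g a b, Rabs (RiemannInt pr - I) < eps.

Definition vcons (t : R) (z : nat -> R) : nat -> R :=
  fun i => match i with O => t | S j => z j end.

(* iter_int n F I : the iterated improper integral of F over the first n
   coordinates (integrating coordinate 0 outermost) exists and equals I. *)
Fixpoint iter_int (n : nat) (F : (nat -> R) -> R) (I : R) : Prop :=
  match n with
  | O => I = F (fun _ => 0)
  | S m => exists g : R -> R,
      (forall t, iter_int m (fun z => F (vcons t z)) (g t)) /\ improper_int g I
  end.

(* gauss_expect d A f E : with Z ~ N(0, I_d) and X = A Z (so X ~ N(0, A A^T)),
   E = E[f(X)] = integral over R^d of f(A z) * phi_d(z) dz. *)
Definition gauss_expect (d : nat) (A : nat -> nat -> R) (f : (nat -> R) -> R) (E : R) : Prop :=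
  iter_int d (fun z => f (matvec d A z) * std_gauss_density d z) E.

(* Main.v *)
Require Import Defs.
From Coquelicot Require Import Coquelicot.
From Stdlib Require Import Reals Lra Lia IndefiniteDescription FunctionalExtensionality.
Open Scope R_scope.

Lemma cex (f : R -> R) a b : (forall x, continuous f x) -> ex_RInt f a b.
Proof. intros H; apply (@ex_RInt_continuous R_CompleteNormedModule); intros; apply H. Qed.

Definition gf (t : R) := exp (-(t*t)).
Lemma gf_cont x : continuous gf x.
Proof. apply (@ex_derive_continuous R_AbsRing R_NormedModule); unfold gf; auto_derive; auto. Qed.

Definition Phi (x : R) := RInt gf 0 x.
Definition uf (x t : R) := exp (-(x*x)*(1+t*t)) / (1+t*t).
Definition U (x : R) := RInt (uf x) 0 1.

Lemma pos1 t : 0 < 1 + t*t.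
Proof. nra. Qed.

Lemma uf_der x t : is_derive (fun y => uf y t) x (-2*x*exp (-(x*x)*(1+t*t))).
Proof.
  unfold uf. auto_derive. { generalize (pos1 t); lra. }
  field. generalize (pos1 t); lra.
Qed.

Lemma U_der x : is_derive U x (RInt (fun t => -2*x*exp (-(x*x)*(1+t*t))) 0 1).
Proof.
  unfold U.
  assert (E: RInt (fun t => -2*x*exp (-(x*x)*(1+t*t))) 0 1 =
             RInt (fun t => Derive (fun u => uf u t) x) 0 1).
  { apply RInt_ext. intros. symmetry. apply is_derive_unique, uf_der. }
  rewrite E.
  apply (is_derive_RInt_param uf 0 1 x).
  - apply filter_forall. intros y t _. eexists. apply uf_der.
  - intros t _.
    apply continuity_2d_pt_ext with (f := fun u v => -2*u*exp (-(u*u)*(1+v*v))).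
    { intros; symmetry; apply is_derive_unique, uf_der. }
    apply continuity_2d_pt_mult.
    + apply continuity_2d_pt_mult. apply continuity_2d_pt_const. apply continuity_2d_pt_id1.
    + apply continuity_1d_2d_pt_comp with (f := exp).
      * apply derivable_continuous_pt, derivable_pt_exp.
      * apply continuity_2d_pt_mult.
        -- apply continuity_2d_pt_opp, continuity_2d_pt_mult; apply continuity_2d_pt_id1.
        -- apply continuity_2d_pt_plus. apply continuity_2d_pt_const.
           apply continuity_2d_pt_mult; apply continuity_2d_pt_id2.
  - apply filter_forall. intros y. apply cex. intros t.
    apply (@ex_derive_continuous R_AbsRing R_NormedModule). unfold uf. auto_derive. generalize (pos1 t); lra.
Qed.

Lemma Phi_der x : is_derive Phi x (gf x).
Proof.
  apply (@is_derive_RInt R_CompleteNormedModule gf Phi 0 x).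
  - apply filter_forall. intros b. apply (@RInt_correct R_CompleteNormedModule). apply cex, gf_cont.
  - apply gf_cont.
Qed.

Lemma RInt_mulc (f : R -> R) a b c : ex_RInt f a b -> RInt (fun t => c * f t) a b = c * RInt f a b.
Proof. intros E. apply (@RInt_scal R_CompleteNormedModule f a b c E). Qed.

Lemma RInt_lin (f : R -> R) u v a b : ex_RInt f (u*a+v) (u*b+v) ->
  RInt (fun y => u * f (u*y+v)) a b = RInt f (u*a+v) (u*b+v).
Proof. intros E. apply (@RInt_comp_lin R_CompleteNormedModule f u v a b E). Qed.

Lemma RInt_extR (f g : R -> R) a b : (forall x, Rmin a b < x < Rmax a b -> f x = g x) ->
  RInt f a b = RInt g a b.
Proof. intros E. apply (@RInt_ext R_CompleteNormedModule). exact E. Qed.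

Lemma U_der2 x : is_derive U x (-2 * gf x * Phi x).
Proof.
  replace (-2 * gf x * Phi x) with (RInt (fun t => -2*x*exp (-(x*x)*(1+t*t))) 0 1).
  apply U_der.
  transitivity (RInt (fun t => (-2 * gf x) * (x * gf (x*t+0))) 0 1).
  { apply RInt_extR. intros t _. unfold gf.
    rewrite Rplus_0_r.
    replace (-(x*x)*(1+t*t)) with (-(x*x) + -((x*t)*(x*t))) by ring.
    rewrite exp_plus. ring. }
  rewrite RInt_mulc.
  2:{ apply cex. intros t. apply (@ex_derive_continuous R_AbsRing R_NormedModule).
      unfold gf. auto_derive. auto. }
  rewrite (RInt_lin gf x 0 0 1).
  2:{ apply cex, gf_cont. }
  unfold Phi. simpl.
  rewrite Rmult_0_r, Rplus_0_r, Rmult_1_r, Rplus_0_r. reflexivity.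
Qed.

Definition Hg x := U x + Phi x * Phi x.

Lemma H_der x : is_derive Hg x 0.
Proof.
  unfold Hg.
  replace 0 with (-2 * gf x * Phi x + (gf x * Phi x + Phi x * gf x)) by ring.
  apply (@is_derive_plus R_AbsRing R_NormedModule). apply U_der2.
  apply (@is_derive_mult R_AbsRing); try apply Phi_der. intros; apply Rmult_comm.
Qed.

Lemma H_const x : Hg x = Hg 0.
Proof.
  assert (I: is_RInt (fun _ => 0) 0 x (minus (Hg x) (Hg 0))).
  { apply (@is_RInt_derive R_CompleteNormedModule). intros; apply H_der.
    intros; apply continuous_const. }
  apply (@is_RInt_unique R_CompleteNormedModule) in I. rewrite RInt_const in I.
  unfold scal, minus, plus, opp in I; simpl in I; unfold mult in I; simpl in I. lra.
Qed.

Lemma H0 : Hg 0 = PI/4.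
Proof.
  unfold Hg, Phi. rewrite RInt_point. unfold zero; simpl.
  unfold U.
  assert (E: is_RInt (fun t => / (1 + t^2)) 0 1 (minus (atan 1) (atan 0))).
  { apply (@is_RInt_derive R_CompleteNormedModule).
    intros; apply is_derive_Reals, derivable_pt_lim_atan.
    intros. apply (@ex_derive_continuous R_AbsRing R_NormedModule). auto_derive. nra. }
  apply (@is_RInt_unique R_CompleteNormedModule) in E. rewrite atan_1, atan_0 in E.
  rewrite (RInt_ext _ (fun t => / (1 + t^2))). rewrite E. unfold minus, plus, opp; simpl. ring.
  intros t _. unfold uf. replace (-(0*0)*(1+t*t)) with 0 by ring. rewrite exp_0. simpl. field.
  generalize (pos1 t); lra.
Qed.

Lemma exp_pos' x : 0 < exp x. Proof. apply exp_pos. Qed.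

Lemma gf_pos t : 0 < gf t. Proof. apply exp_pos. Qed.

Lemma U_bounds x : 0 <= U x <= exp (-(x*x)).
Proof.
  unfold U. assert (ex: ex_RInt (uf x) 0 1).
  { apply cex. intros t. apply (@ex_derive_continuous R_AbsRing R_NormedModule). unfold uf. auto_derive. generalize (pos1 t); lra. }
  split.
  - apply RInt_ge_0. lra. exact ex. intros t _. unfold uf. apply Rlt_le, Rdiv_lt_0_compat. apply exp_pos. apply pos1.
  - apply Rle_trans with (RInt (fun _ => exp (-(x*x))) 0 1).
    + apply RInt_le. lra. exact ex. apply cex; intros; apply continuous_const.
      intros t Ht. unfold uf. generalize (pos1 t); intro P.
      apply Rle_trans with (exp (- (x*x)*(1+t*t))).
      * unfold Rdiv. rewrite <- (Rmult_1_r (exp _)) at 2. apply Rmult_le_compat_l. apply Rlt_le, exp_pos.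
        rewrite <- Rinv_1. apply Rinv_le_contravar. lra. nra.
      * destruct (Req_dec (x*x*(t*t)) 0) as [E|E].
        { right. f_equal. nra. }
        left. apply exp_increasing. assert (0 < x*x*(t*t)). { assert (0 <= x*x*(t*t)) by (apply Rmult_le_pos; nra). lra. } nra.
    + rewrite RInt_const. unfold scal; simpl; unfold mult; simpl. lra.
Qed.

Lemma Phi_sq x : Phi x * Phi x = PI/4 - U x.
Proof. generalize (H_const x) H0. unfold Hg. lra. Qed.

Lemma Phi_nonneg x : 0 <= x -> 0 <= Phi x.
Proof. intros. apply RInt_ge_0; auto. apply cex, gf_cont. intros; apply Rlt_le, gf_pos. Qed.

Lemma Phi_odd x : Phi (-x) = - Phi x.
Proof.
  unfold Phi.
  assert (E := RInt_lin gf (-1) 0 0 x (cex _ _ _ gf_cont)).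
  replace (-1*0+0) with 0 in E by ring. replace (-1*x+0) with (-x) in E by ring.
  rewrite <- E.
  rewrite (RInt_extR _ (fun y => -1 * gf y)).
  rewrite RInt_mulc. simpl. ring. apply cex, gf_cont.
  intros y _. unfold gf. f_equal. f_equal. f_equal. ring.
Qed.

Definition sp := sqrt PI / 2.
Lemma sp_pos : 0 < sp.
Proof. unfold sp. generalize PI_RGT_0; intro. apply Rdiv_lt_0_compat. apply sqrt_lt_R0; lra. lra. Qed.

Lemma sp_sq : sp * sp = PI / 4.
Proof. unfold sp. generalize PI_RGT_0; intro. field_simplify. rewrite <- Rsqr_pow2. rewrite Rsqr_sqrt. field. lra. Qed.

Lemma exp_m_sq x : 0 < x -> exp (-(x*x)) <= / x.
Proof.
  intros Hx. rewrite exp_Ropp. apply Rinv_le_contravar. auto.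
  generalize (exp_ineq1_le (x*x)). nra.
Qed.

Lemma Phi_lim x : 0 < x -> Rabs (Phi x - sp) <= / (x * sp).
Proof.
  intros Hx. generalize (Phi_sq x) (U_bounds x) sp_sq sp_pos (Phi_nonneg x (Rlt_le _ _ Hx)) (exp_m_sq x Hx).
  intros E1 [U1 U2] E2 Sp Pn Ex.
  assert (Hk: (Phi x - sp) * (Phi x + sp) = - U x) by nra.
  assert (Hp: 0 < Phi x + sp) by lra.
  assert (Hv: Phi x - sp = - U x / (Phi x + sp)) by (field_simplify_eq; [nra|lra]).
  rewrite Hv. unfold Rdiv. rewrite Rabs_mult, Rabs_Ropp, Rabs_right by lra.
  rewrite Rabs_right by (apply Rle_ge, Rlt_le, Rinv_0_lt_compat; lra).
  rewrite Rinv_mult.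
  apply Rmult_le_compat; try lra. apply Rlt_le, Rinv_0_lt_compat; lra.
  apply Rinv_le_contravar; lra.
Qed.

Lemma imp_of_RInt (g : R -> R) I : (forall a b, ex_RInt g a b) ->
  (forall eps, 0 < eps -> exists M, forall a b, a <= -M -> M <= b -> Rabs (RInt g a b - I) < eps) ->
  improper_int g I.
Proof.
  intros Hex H eps Heps. destruct (H eps Heps) as [M HM]. exists M. intros a b Ha Hb.
  exists (ex_RInt_Reals_0 _ _ _ (Hex a b)). rewrite <- RInt_Reals. apply HM; auto.
Qed.

Lemma RInt_of_imp (g : R -> R) I : improper_int g I ->
  forall eps, 0 < eps -> exists M, forall a b, a <= -M -> M <= b ->
    ex_RInt g a b /\ Rabs (RInt g a b - I) < eps.
Proof.
  intros H eps Heps. destruct (H eps Heps) as [M HM]. exists M. intros a b Ha Hb.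
  destruct (HM a b Ha Hb) as [pr Hpr]. split. apply ex_RInt_Reals_1; auto.
  rewrite (RInt_Reals _ _ _ pr). auto.
Qed.

Definition phi (t : R) := exp (- t^2 / 2) / sqrt (2 * PI).

Lemma phi_pos t : 0 < phi t.
Proof. unfold phi. apply Rdiv_lt_0_compat. apply exp_pos. apply sqrt_lt_R0. generalize PI_RGT_0; lra. Qed.

Lemma phi_cont t : continuous phi t.
Proof. apply (@ex_derive_continuous R_AbsRing R_NormedModule). unfold phi. auto_derive.
  generalize PI_RGT_0; intro. assert (0 < sqrt (2*PI)) by (apply sqrt_lt_R0; lra). lra. Qed.

Lemma Phi_diff p q : RInt gf p q = Phi q - Phi p.
Proof.
  unfold Phi. assert (E := RInt_Chasles gf 0 p q (cex _ _ _ gf_cont) (cex _ _ _ gf_cont)).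
  change (RInt gf 0 p + RInt gf p q = RInt gf 0 q) in E. lra.
Qed.

Lemma RInt_phi a b : RInt phi a b = (Phi (/sqrt 2 * b) - Phi (/sqrt 2 * a)) / sqrt PI.
Proof.
  assert (P := PI_RGT_0). assert (S2: 0 < sqrt 2) by (apply sqrt_lt_R0; lra).
  assert (SP: 0 < sqrt PI) by (apply sqrt_lt_R0; lra).
  rewrite (RInt_extR _ (fun y => / sqrt PI * (/sqrt 2 * gf (/sqrt 2 * y + 0)))).
  - rewrite RInt_mulc. rewrite RInt_lin. rewrite Phi_diff. rewrite !Rplus_0_r. unfold Rdiv; apply Rmult_comm.
    apply cex, gf_cont.
    apply cex. intros. apply (@ex_derive_continuous R_AbsRing R_NormedModule). unfold gf. auto_derive. auto.
  - intros y _. unfold phi, gf. rewrite Rplus_0_r.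
    replace (- (/ sqrt 2 * y * (/ sqrt 2 * y))) with (- y^2/2).
    rewrite sqrt_mult by lra. field. lra.
    replace (/ sqrt 2 * y * (/ sqrt 2 * y)) with (y*y / (sqrt 2 * sqrt 2)) by (field; lra).
    rewrite sqrt_sqrt by lra. field.
Qed.

Lemma phi_int : improper_int phi 1.
Proof.
  assert (P := PI_RGT_0). assert (S2: 0 < sqrt 2) by (apply sqrt_lt_R0; lra).
  assert (SP: 0 < sqrt PI) by (apply sqrt_lt_R0; lra).
  assert (Sp := sp_pos).
  assert (spE : sp * 2 = sqrt PI) by (unfold sp; field).
  apply imp_of_RInt. intros; apply cex, phi_cont.
  intros eps Heps.
  set (u := / sqrt 2). assert (Hu: 0 < u) by (apply Rinv_0_lt_compat; lra).
  set (c := 2 / (u * sp * sqrt PI)).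
  assert (Hc: 0 < c). { unfold c. apply Rdiv_lt_0_compat. lra. apply Rmult_lt_0_compat; [apply Rmult_lt_0_compat|]; lra. }
  exists (c / eps + 1). intros a b Ha Hb.
  assert (Hce: 0 < c / eps) by (apply Rdiv_lt_0_compat; lra).
  rewrite RInt_phi. fold u.
  replace (u * a) with (- (u * (-a))) by ring. rewrite Phi_odd.
  assert (B1 := Phi_lim (u*b) ltac:(apply Rmult_lt_0_compat; lra)).
  assert (B2 := Phi_lim (u*(-a)) ltac:(apply Rmult_lt_0_compat; lra)).
  replace ((Phi (u * b) - - Phi (u * - a)) / sqrt PI - 1) with
     (((Phi (u * b) - sp) + (Phi (u * - a) - sp)) / sqrt PI) by (field_simplify_eq; lra).
  unfold Rdiv. rewrite Rabs_mult, (Rabs_right (/ sqrt PI)) by (apply Rle_ge, Rlt_le, Rinv_0_lt_compat; lra).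
  apply Rle_lt_trans with ((/ (u * b * sp) + / (u * - a * sp)) * / sqrt PI).
  { apply Rmult_le_compat_r. apply Rlt_le, Rinv_0_lt_compat; lra.
    eapply Rle_trans. apply Rabs_triang. lra. }
  assert (K: forall x, c/eps + 1 <= x -> / (u * x * sp) * / sqrt PI <= eps / 2 * / (c/eps + 1) * (c/eps)).
  { intros x Hx. unfold c.
    replace (/ (u * x * sp) * / sqrt PI) with ((2 / (u * sp * sqrt PI)) / 2 / x) by (field; lra).
    fold c. replace (eps / 2 * / (c / eps + 1) * (c / eps)) with (c / 2 / (c/eps + 1)) by (field; lra).
    unfold Rdiv at 1 3. apply Rmult_le_compat_l. lra. apply Rinv_le_contravar; lra. }
  assert (K1 := K b Hb). assert (K2 := K (-a) ltac:(lra)).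
  assert (eps / 2 * / (c / eps + 1) * (c / eps) < eps / 2).
  { replace (eps / 2 * / (c / eps + 1) * (c / eps)) with (eps/2 * ((c/eps) / (c/eps+1))) by (field; lra).
    rewrite <- (Rmult_1_r (eps/2)) at 2. apply Rmult_lt_compat_l. lra.
    set (y := c/eps) in *. apply (Rmult_lt_reg_r (y+1)). lra.
    unfold Rdiv. rewrite Rmult_assoc, Rinv_l by lra. lra. }
  rewrite Rmult_plus_distr_r. lra.
Qed.

Lemma RInt_plusR (f g : R -> R) a b : ex_RInt f a b -> ex_RInt g a b ->
  RInt (fun t => f t + g t) a b = RInt f a b + RInt g a b.
Proof. intros. apply (@RInt_plus R_CompleteNormedModule f g a b); auto. Qed.

Lemma imp_plus f g I J : improper_int f I -> improper_int g J ->
  improper_int (fun t => f t + g t) (I + J).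
Proof.
  intros Hf Hg eps Heps.
  destruct (RInt_of_imp _ _ Hf (eps/2)) as [M1 H1]. lra.
  destruct (RInt_of_imp _ _ Hg (eps/2)) as [M2 H2]. lra.
  exists (Rmax M1 M2). intros a b Ha Hb.
  destruct (H1 a b) as [E1 B1]. generalize (Rmax_l M1 M2); lra. generalize (Rmax_l M1 M2); lra.
  destruct (H2 a b) as [E2 B2]. generalize (Rmax_r M1 M2); lra. generalize (Rmax_r M1 M2); lra.
  assert (E: ex_RInt (fun t => f t + g t) a b) by (apply (@ex_RInt_plus R_NormedModule); auto).
  exists (ex_RInt_Reals_0 _ _ _ E). rewrite <- RInt_Reals.
  rewrite (RInt_plusR f g a b E1 E2).
  replace (RInt f a b + RInt g a b - (I + J)) with ((RInt f a b - I) + (RInt g a b - J)) by ring.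
  eapply Rle_lt_trans. apply Rabs_triang. lra.
Qed.

Lemma imp_scal f I c : improper_int f I -> improper_int (fun t => c * f t) (c * I).
Proof.
  intros Hf eps Heps.
  destruct (RInt_of_imp _ _ Hf (eps/(Rabs c + 1))) as [M1 H1].
  apply Rdiv_lt_0_compat; auto. generalize (Rabs_pos c); lra.
  exists M1. intros a b Ha Hb. destruct (H1 a b Ha Hb) as [E1 B1].
  assert (E: ex_RInt (fun t => c * f t) a b) by (apply (@ex_RInt_scal R_NormedModule); auto).
  exists (ex_RInt_Reals_0 _ _ _ E). rewrite <- RInt_Reals. rewrite RInt_mulc by auto.
  rewrite <- Rmult_minus_distr_l, Rabs_mult.
  apply Rle_lt_trans with ((Rabs c + 1) * Rabs (RInt f a b - I)).
  apply Rmult_le_compat_r. apply Rabs_pos. lra.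
  apply (Rmult_lt_reg_l (/ (Rabs c + 1))). apply Rinv_0_lt_compat; generalize (Rabs_pos c); lra.
  rewrite <- Rmult_assoc, Rinv_l by (generalize (Rabs_pos c); lra). rewrite Rmult_1_l.
  rewrite Rmult_comm. exact B1.
Qed.

Lemma imp_mono f g I J : (forall t, f t <= g t) -> improper_int f I -> improper_int g J -> I <= J.
Proof.
  intros Hfg Hf Hg. apply Rnot_lt_le. intro Hlt.
  set (eps := (I - J)/2).
  destruct (RInt_of_imp _ _ Hf eps) as [M1 H1]. unfold eps; lra.
  destruct (RInt_of_imp _ _ Hg eps) as [M2 H2]. unfold eps; lra.
  set (M := Rmax 0 (Rmax M1 M2)).
  assert (0 <= M) by apply Rmax_l. assert (M1 <= M) by (unfold M; eapply Rle_trans; [apply Rmax_l|apply Rmax_r]).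
  assert (M2 <= M) by (unfold M; eapply Rle_trans; [apply Rmax_r|apply Rmax_r]).
  destruct (H1 (-M) M) as [E1 B1]; try lra. destruct (H2 (-M) M) as [E2 B2]; try lra.
  assert (RInt f (-M) M <= RInt g (-M) M) by (apply RInt_le; auto; lra).
  apply Rabs_def2 in B1. apply Rabs_def2 in B2. unfold eps in *. lra.
Qed.

Lemma imp_unique f I J : improper_int f I -> improper_int f J -> I = J.
Proof. intros. apply Rle_antisym; eapply imp_mono; eauto; intros; lra. Qed.

Lemma imp_ext f g I : (forall t, f t = g t) -> improper_int f I -> improper_int g I.
Proof.
  intros E H. replace g with f. auto. apply FunctionalExtensionality.functional_extensionality; auto.
Qed.

Lemma imp_shift f I c : improper_int f I -> improper_int (fun t => f (t + c)) I.
Proof.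
  intros Hf eps Heps. destruct (RInt_of_imp _ _ Hf eps Heps) as [M H].
  exists (M + Rabs c). intros a b Ha Hb.
  generalize (Rabs_pos c) (Rle_abs c) (Rle_abs (-c)); rewrite Rabs_Ropp; intros.
  destruct (H (a + c) (b + c)) as [E B]; try lra.
  assert (E' : ex_RInt (fun t => f (t + c)) a b).
  { apply (ex_RInt_ext (fun t => 1 * f (1 * t + c))). intros; simpl; rewrite !Rmult_1_l; auto.
    apply (@ex_RInt_comp_lin R_CompleteNormedModule f 1 c a b). rewrite !Rmult_1_l; auto. }
  exists (ex_RInt_Reals_0 _ _ _ E'). rewrite <- RInt_Reals.
  rewrite (RInt_extR _ (fun t => 1 * f (1 * t + c))). rewrite RInt_lin. rewrite !Rmult_1_l; auto.
  rewrite !Rmult_1_l; auto. intros; rewrite !Rmult_1_l; auto.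
Qed.

Definition Dm (t : R) := exp (- Rabs t).

Lemma Dm_cont t : continuous Dm t.
Proof.
  unfold Dm. apply (continuous_comp Rabs (fun y => exp (-y))).
  apply continuous_Rabs. apply (@ex_derive_continuous R_AbsRing R_NormedModule). auto_derive; auto.
Qed.

Lemma RInt_Dm_pos x y : 0 <= x <= y -> RInt Dm x y = exp (-x) - exp (-y).
Proof.
  intros Hxy. rewrite (RInt_extR _ (fun t => exp (-t))).
  - assert (E: is_RInt (fun t => exp (-t)) x y (minus (- exp (-y)) (- exp (-x)))).
    { apply (@is_RInt_derive R_CompleteNormedModule (fun t => - exp (-t))).
      intros t _. auto_derive; auto. ring.
      intros t _. apply (@ex_derive_continuous R_AbsRing R_NormedModule). auto_derive; auto. }
    apply (@is_RInt_unique R_CompleteNormedModule) in E. rewrite E. unfold minus, plus, opp; simpl. ring.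
  - intros t Ht. rewrite Rmin_left, Rmax_right in Ht by lra. unfold Dm. rewrite Rabs_right by lra. auto.
Qed.

Lemma RInt_Dm_neg x y : 0 <= x <= y -> RInt Dm (-y) (-x) = exp (-x) - exp (-y).
Proof.
  intros Hxy. rewrite (RInt_extR _ (fun t => exp t)).
  - assert (E: is_RInt (fun t => exp t) (-y) (-x) (minus (exp (-x)) (exp (-y)))).
    { apply (@is_RInt_derive R_CompleteNormedModule (fun t => exp t)).
      intros t _. auto_derive; auto. ring.
      intros t _. apply (@ex_derive_continuous R_AbsRing R_NormedModule). auto_derive; auto. }
    apply (@is_RInt_unique R_CompleteNormedModule) in E. rewrite E. unfold minus, plus, opp; simpl. ring.
  - intros t Ht. rewrite Rmin_left, Rmax_right in Ht by lra. unfold Dm. rewrite Rabs_left by lra.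
    rewrite Ropp_involutive. auto.
Qed.

Lemma RInt_abs_bound (g : R -> R) C a b : a <= b -> (forall t, continuous g t) ->
  (forall t, Rabs (g t) <= C * Dm t) -> Rabs (RInt g a b) <= C * RInt Dm a b.
Proof.
  intros Hab Hc Hb. eapply Rle_trans. apply abs_RInt_le. auto. apply cex; auto.
  rewrite <- RInt_mulc by (apply cex, Dm_cont).
  apply RInt_le; auto. apply ex_RInt_norm, cex; auto.
  apply cex. intros t. apply (continuous_comp Dm (fun y => C * y)). apply Dm_cont. apply (@ex_derive_continuous R_AbsRing R_NormedModule). auto_derive; auto.
Qed.

Lemma lim_cauchy (P : R -> R) K : 0 <= K ->
  (forall x y, 0 <= x <= y -> Rabs (P y - P x) <= K * exp (-x)) ->
  exists L, forall x, 0 <= x -> Rabs (P x - L) <= K * exp (-x).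
Proof.
  intros HK HP.
  assert (Hexp: forall x, 0 <= x -> K * exp (-x) <= K / (1 + x)).
  { intros x Hx. rewrite exp_Ropp. unfold Rdiv. apply Rmult_le_compat_l; auto.
    apply Rinv_le_contravar. lra. apply exp_ineq1_le. }
  assert (Cc: Cauchy_crit (fun n => P (INR n))).
  { intros eps Heps. destruct (archimed (K/eps)) as [Ha _].
    destruct (INR_unbounded (K/eps)) as [N HN].
    exists N. intros n m Hn Hm. unfold Rdist.
    assert (HNn: INR N <= INR n) by (apply le_INR; lia).
    assert (HNm: INR N <= INR m) by (apply le_INR; lia).
    assert (0 <= INR N) by apply pos_INR.
    assert (bnd: forall x y, INR N <= x <= y -> Rabs (P y - P x) < eps).
    { intros x y Hxy. eapply Rle_lt_trans. apply HP; lra. eapply Rle_lt_trans. apply Hexp; lra.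
      apply (Rmult_lt_reg_r (1+x)). lra. unfold Rdiv. rewrite Rmult_assoc, Rinv_l by lra.
      assert (K < eps * INR N).
      { apply (Rmult_lt_reg_r (/eps)). apply Rinv_0_lt_compat; lra.
        rewrite (Rmult_comm eps), Rmult_assoc, Rinv_r by lra. lra. }
      nra. }
    destruct (Rle_dec (INR n) (INR m)).
    - rewrite <- Rabs_Ropp, Ropp_minus_distr. apply bnd; lra.
    - apply bnd; lra. }
  destruct (R_complete _ Cc) as [L HL]. exists L. intros x Hx.
  apply Rnot_lt_le. intro Hlt. set (e := Rabs (P x - L) - K * exp (-x)).
  destruct (HL e) as [N HN]. unfold e; lra.
  destruct (INR_unbounded x) as [N2 HN2].
  assert (H1 := HN (max N N2) ltac:(lia)). unfold Rdist in H1.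
  assert (INR N2 <= INR (max N N2)) by (apply le_INR; lia).
  assert (H3 := HP x (INR (max N N2)) ltac:(lra)).
  assert (Rabs (P x - L) <= Rabs (P (INR (max N N2)) - P x) + Rabs (P (INR (max N N2)) - L)).
  { replace (P x - L) with (-(P (INR (max N N2)) - P x) + (P (INR (max N N2)) - L)) by ring.
    eapply Rle_trans. apply Rabs_triang. rewrite Rabs_Ropp. lra. }
  unfold e in *. lra.
Qed.

Lemma ChaslesR (g : R -> R) a b c : (forall t, continuous g t) -> RInt g a b + RInt g b c = RInt g a c.
Proof. intros Hc. assert (E := RInt_Chasles g a b c (cex _ _ _ Hc) (cex _ _ _ Hc)). exact E. Qed.

Lemma imp_exists (g : R -> R) C : (forall t, continuous g t) ->
  (forall t, Rabs (g t) <= C * Dm t) -> exists I, improper_int g I /\ Rabs I <= 2 * C.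
Proof.
  intros Hc Hb.
  assert (HC: 0 <= C). { generalize (Hb 0) (Rabs_pos (g 0)). unfold Dm. intros.
    assert (0 < exp (- Rabs 0)) by apply exp_pos. nra. }
  assert (Dpos : forall x, 0 <= exp (-x)) by (intros; apply Rlt_le, exp_pos).
  assert (HP: forall x y, 0 <= x <= y -> Rabs (RInt g 0 y - RInt g 0 x) <= C * exp (-x)).
  { intros x y Hxy. rewrite <- (ChaslesR g 0 x y) by auto.
    rewrite (Rplus_minus_l (RInt g 0 x) (RInt g x y)).
    eapply Rle_trans. apply RInt_abs_bound; auto; lra. rewrite RInt_Dm_pos by auto.
    generalize (Dpos y). nra. }
  assert (HQ: forall x y, 0 <= x <= y -> Rabs (RInt g (-y) 0 - RInt g (-x) 0) <= C * exp (-x)).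
  { intros x y Hxy. rewrite <- (ChaslesR g (-y) (-x) 0) by auto.
    rewrite (Rplus_minus_r (RInt g (-y) (-x)) (RInt g (-x) 0)).
    eapply Rle_trans. apply RInt_abs_bound; auto; lra. rewrite RInt_Dm_neg by auto.
    generalize (Dpos y). nra. }
  destruct (lim_cauchy _ _ HC HP) as [L1 H1].
  destruct (lim_cauchy _ _ HC HQ) as [L2 H2].
  exists (L1 + L2). split.
  - apply imp_of_RInt. intros; apply cex; auto.
    intros eps Heps. exists (2 * C / eps). intros a b Ha0 Hb0.
    assert (0 <= 2 * C / eps) by (apply Rmult_le_pos; [lra|apply Rlt_le, Rinv_0_lt_compat; lra]).
    rewrite <- (ChaslesR g a 0 b) by auto.
    assert (A1 := H1 b ltac:(lra)). assert (A2 := H2 (-a) ltac:(lra)).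
    rewrite Ropp_involutive in A2.
    assert (Hx: forall x, 2 * C / eps <= x -> C * exp (-x) < eps / 2).
    { intros x Hx. apply Rle_lt_trans with (C / (1 + x)).
      rewrite exp_Ropp. unfold Rdiv. apply Rmult_le_compat_l; auto.
      apply Rinv_le_contravar. lra. apply exp_ineq1_le.
      apply (Rmult_lt_reg_r (1+x)). lra. unfold Rdiv. rewrite Rmult_assoc, Rinv_l by lra.
      assert (2 * C <= eps * x).
      { apply (Rmult_le_reg_r (/eps)). apply Rinv_0_lt_compat; lra.
        replace (eps*x*/eps) with x by (field; lra). unfold Rdiv in Hx. lra. }
      nra. }
    assert (B1 := Hx b Hb0). assert (B2 := Hx (-a) ltac:(lra)).
    set (r1 := RInt g a 0) in *. set (r2 := RInt g 0 b) in *. clearbody r1 r2.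
    replace (r1 + r2 - (L1 + L2)) with ((r2 - L1) + (r1 - L2)) by ring.
    eapply Rle_lt_trans. apply Rabs_triang. rewrite Ropp_involutive in B2. lra.
  - assert (A1 := H1 0 ltac:(lra)). assert (A2 := H2 0 ltac:(lra)).
    rewrite Ropp_0, RInt_point in A1, A2. change (Rabs (0 - L1) <= C * exp 0) in A1.
    change (Rabs (0 - L2) <= C * exp 0) in A2.
    rewrite exp_0, Rmult_1_r in A1, A2.
    rewrite Rminus_0_l, Rabs_Ropp in A1, A2.
    eapply Rle_trans. apply Rabs_triang. lra.
Qed.

Lemma sqrt2pi_ge1 : 1 <= sqrt (2 * PI).
Proof. rewrite <- sqrt_1. apply sqrt_le_1_alt. generalize PI_RGT_0; intro. generalize PI2_1; intros; lra. Qed.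

Lemma exp_le x y : x <= y -> exp x <= exp y.
Proof. intros [H|H]. left; apply exp_increasing; auto. right; subst; auto. Qed.

Lemma phi_le t : phi t <= exp (- t^2/2).
Proof.
  unfold phi. assert (S := sqrt2pi_ge1). unfold Rdiv. rewrite <- (Rmult_1_r (exp _)) at 2.
  apply Rmult_le_compat_l. apply Rlt_le, exp_pos. rewrite <- Rinv_1. apply Rinv_le_contravar; lra.
Qed.

Lemma phi_exp_bound a t : phi t * exp (a * Rabs t) <= exp ((a+1)^2/2) * Dm t.
Proof.
  eapply Rle_trans. apply Rmult_le_compat_r. apply Rlt_le, exp_pos. apply phi_le.
  unfold Dm. rewrite <- !exp_plus. apply exp_le.
  assert (t^2 = Rabs t * Rabs t) by (rewrite <- Rabs_mult; simpl; rewrite Rmult_1_r; symmetry; apply Rabs_right; nra).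
  assert (h := pow2_ge_0 (a + 1 - Rabs t)). nra.
Qed.

Lemma phi_Dm t : phi t <= 2 * Dm t.
Proof.
  generalize (phi_exp_bound 0 t). rewrite Rmult_0_l, exp_0, Rmult_1_r.
  intros H. eapply Rle_trans. apply H. apply Rmult_le_compat_r. apply Rlt_le, exp_pos.
  replace ((0+1)^2/2) with (/2) by field.
  assert (exp (/2) * exp (/2) <= 4).
  { rewrite <- exp_plus. replace (/2 + /2) with 1 by field. generalize exp_le_3; lra. }
  assert (0 < exp (/2)) by apply exp_pos. nra.
Qed.

Lemma Dm_small x : Dm x <= / (1 + Rabs x).
Proof. unfold Dm. rewrite exp_Ropp. apply Rinv_le_contravar. generalize (Rabs_pos x); lra. apply exp_ineq1_le. Qed.

Lemma tphi_int : improper_int (fun t => t * phi t) 0.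
Proof.
  apply imp_of_RInt. intros; apply cex. intros; apply (continuous_mult (fun t => t) phi). apply continuous_id. apply phi_cont.
  intros eps Heps. exists (4 / eps). intros a b Ha Hb.
  assert (0 < 4/eps) by (apply Rdiv_lt_0_compat; lra).
  assert (E: is_RInt (fun t => t * phi t) a b (minus (- phi b) (- phi a))).
  { apply (@is_RInt_derive R_CompleteNormedModule (fun t => - phi t)).
    intros t _. unfold phi. auto_derive. generalize sqrt2pi_ge1; lra. replace (exp (- (t * (t * 1)) * / 2)) with (exp (- t^2/2)) by (f_equal; field). field. generalize sqrt2pi_ge1; lra.
    intros y _. apply (continuous_mult (fun t => t) phi). apply continuous_id. apply phi_cont. }
  apply (@is_RInt_unique R_CompleteNormedModule) in E. rewrite E. unfold minus, plus, opp; simpl.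
  assert (K: forall x, 4/eps <= Rabs x -> phi x < eps/2).
  { intros x Hx. eapply Rle_lt_trans. apply phi_Dm. eapply Rle_lt_trans.
    apply Rmult_le_compat_l. lra. apply Dm_small.
    apply (Rmult_lt_reg_r (1 + Rabs x)). generalize (Rabs_pos x); lra.
    rewrite Rmult_assoc, Rinv_l by (generalize (Rabs_pos x); lra).
    assert (4 <= eps * Rabs x).
    { replace 4 with (eps * (4/eps)) by (field; lra). apply Rmult_le_compat_l; lra. }
    nra. }
  assert (K1 := K a ltac:(rewrite Rabs_left1 by lra; lra)).
  assert (K2 := K b ltac:(rewrite Rabs_right by lra; lra)).
  generalize (phi_pos a) (phi_pos b); intros.
  rewrite Rminus_0_r. apply Rabs_def1; lra.
Qed.

Lemma cont_of_eps (h : R -> R) t0 :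
  (forall eps, 0 < eps -> exists del, 0 < del /\ forall t, Rabs (t - t0) < del -> Rabs (h t - h t0) < eps) ->
  continuous h t0.
Proof.
  intros H. apply continuity_pt_filterlim. unfold continuity_pt, continue_in, limit1_in, limit_in.
  intros eps Heps. destruct (H eps Heps) as [del [Hd Hdel]]. exists del. split; auto.
  intros x [_ Hx]. simpl in *. unfold Rdist in *. apply Hdel; auto.
Qed.

Lemma cont_of_lip (h : R -> R) L K : 0 <= L -> 0 <= K ->
  (forall t t', Rabs (h t - h t') <= L * exp (K * (Rabs t + Rabs t')) * Rabs (t - t')) ->
  forall t0, continuous h t0.
Proof.
  intros HL HK H t0. apply cont_of_eps. intros eps Heps.
  set (Q := L * exp (K * (2 * Rabs t0 + 1)) + 1).
  assert (HQ: 0 < Q). { unfold Q. assert (0 < exp (K * (2 * Rabs t0 + 1))) by apply exp_pos. nra. }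
  exists (Rmin 1 (eps / Q)). split. apply Rmin_pos. lra. apply Rdiv_lt_0_compat; lra.
  intros t Ht. assert (Ht1: Rabs (t - t0) < 1) by (eapply Rlt_le_trans; [apply Ht|apply Rmin_l]).
  assert (Ht2: Rabs (t - t0) < eps / Q) by (eapply Rlt_le_trans; [apply Ht|apply Rmin_r]).
  eapply Rle_lt_trans. apply H.
  assert (Rabs t <= Rabs t0 + 1).
  { replace t with (t0 + (t - t0)) by ring. eapply Rle_trans. apply Rabs_triang. lra. }
  assert (E: L * exp (K * (Rabs t + Rabs t0)) <= L * exp (K * (2 * Rabs t0 + 1))).
  { apply Rmult_le_compat_l; auto. apply exp_le. apply Rmult_le_compat_l; auto. lra. }
  apply Rle_lt_trans with (Q * Rabs (t - t0)).
  { apply Rmult_le_compat_r. apply Rabs_pos. unfold Q. lra. }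
  apply (Rmult_lt_reg_l (/Q)). apply Rinv_0_lt_compat; lra.
  rewrite <- Rmult_assoc, Rinv_l by lra. rewrite Rmult_1_l. unfold Rdiv in Ht2. lra.
Qed.

Lemma rsum_S m f : rsum (S m) f = f O + rsum m (fun k => f (S k)).
Proof.
  induction m as [|m IH]; simpl. ring.
  simpl in IH. rewrite IH. ring.
Qed.

Lemma rprod_S m f : rprod (S m) f = f O * rprod m (fun k => f (S k)).
Proof.
  induction m as [|m IH]; simpl. ring.
  simpl in IH. rewrite IH. ring.
Qed.

Lemma rsum_ext n f g : (forall k, (k < n)%nat -> f k = g k) -> rsum n f = rsum n g.
Proof. induction n; simpl; intros H; auto. rewrite IHn. rewrite H by lia. auto. intros; apply H; lia. Qed.

Lemma rsum_plus n f g : rsum n (fun k => f k + g k) = rsum n f + rsum n g.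
Proof. induction n; simpl. ring. rewrite IHn. ring. Qed.

Lemma rsum_scal n c f : rsum n (fun k => c * f k) = c * rsum n f.
Proof. induction n; simpl. ring. rewrite IHn. ring. Qed.

Lemma rsum_le n f g : (forall k, (k < n)%nat -> f k <= g k) -> rsum n f <= rsum n g.
Proof. induction n; simpl; intros. lra. apply Rplus_le_compat. apply IHn; intros; apply H; lia. apply H; lia. Qed.

Lemma rsum_nonneg n f : (forall k, (k < n)%nat -> 0 <= f k) -> 0 <= rsum n f.
Proof. intros. replace 0 with (rsum n (fun _ => 0)). apply rsum_le; auto.
  clear H. induction n; simpl; auto. rewrite IHn; ring. Qed.

Lemma rsum_abs n f : Rabs (rsum n f) <= rsum n (fun k => Rabs (f k)).
Proof. induction n; simpl. rewrite Rabs_R0; lra. eapply Rle_trans. apply Rabs_triang. lra. Qed.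

Lemma rsum_term n f k : (k < n)%nat -> (forall j, (j < n)%nat -> 0 <= f j) -> f k <= rsum n f.
Proof.
  induction n; intros Hk Hf. lia. simpl. destruct (Nat.eq_dec k n).
  - subst. assert (0 <= rsum n f) by (apply rsum_nonneg; intros; apply Hf; lia). lra.
  - assert (f k <= rsum n f) by (apply IHn; [lia| intros; apply Hf; lia]). assert (0 <= f n) by (apply Hf; lia). lra.
Qed.

Definition Sn n (z : nat -> R) := rsum n (fun i => Rabs (z i)).
Definition dist n (z z' : nat -> R) := rsum n (fun i => Rabs (z i - z' i)).
Definition Dens := std_gauss_density.

Lemma Sn_nonneg n z : 0 <= Sn n z.
Proof. apply rsum_nonneg. intros; apply Rabs_pos. Qed.
Lemma dist_nonneg n z z' : 0 <= dist n z z'.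
Proof. apply rsum_nonneg. intros; apply Rabs_pos. Qed.

Lemma Sn_vcons m t z : Sn (S m) (vcons t z) = Rabs t + Sn m z.
Proof. unfold Sn. rewrite rsum_S. reflexivity. Qed.
Lemma dist_vcons m t z t' z' : dist (S m) (vcons t z) (vcons t' z') = Rabs (t - t') + dist m z z'.
Proof. unfold dist. rewrite rsum_S. reflexivity. Qed.
Lemma Dens_vcons m t z : Dens (S m) (vcons t z) = phi t * Dens m z.
Proof. unfold Dens, std_gauss_density. rewrite rprod_S. reflexivity. Qed.

Lemma Dens_pos n z : 0 < Dens n z.
Proof. unfold Dens, std_gauss_density. induction n; simpl. lra. apply Rmult_lt_0_compat; auto. apply (phi_pos (z n)). Qed.

Lemma Sn_lip n z z' : Rabs (Sn n z - Sn n z') <= dist n z z'.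
Proof.
  unfold Sn, dist. replace (rsum n (fun i => Rabs (z i)) - rsum n (fun i => Rabs (z' i)))
    with (rsum n (fun i => Rabs (z i) - Rabs (z' i))).
  eapply Rle_trans. apply rsum_abs. apply rsum_le. intros. apply Rabs_triang_inv2.
  unfold Rminus. rewrite rsum_plus. rewrite <- (Rmult_1_l (rsum n (fun i => Rabs (z' i)))) at 1.
  replace (rsum n (fun i => - Rabs (z' i))) with (rsum n (fun i => -1 * Rabs (z' i))).
  rewrite rsum_scal. ring. apply rsum_ext; intros; ring.
Qed.

Lemma iter_ext n F G I : (forall z, F z = G z) -> iter_int n F I -> iter_int n G I.
Proof. intros E H. replace G with F; auto. apply functional_extensionality; auto. Qed.

Lemma iter_plus n : forall F G I J, iter_int n F I -> iter_int n G J ->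
  iter_int n (fun z => F z + G z) (I + J).
Proof.
  induction n as [|m IH]; simpl; intros F G I J HF HG.
  - subst; auto.
  - destruct HF as [g [Hg Ig]]. destruct HG as [h [Hh Ih]].
    exists (fun t => g t + h t). split. intros t. apply (IH (fun z => F (vcons t z)) (fun z => G (vcons t z))); auto.
    apply imp_plus; auto.
Qed.

Lemma iter_scal n : forall F I c, iter_int n F I -> iter_int n (fun z => c * F z) (c * I).
Proof.
  induction n as [|m IH]; simpl; intros F I c HF.
  - subst; auto.
  - destruct HF as [g [Hg Ig]]. exists (fun t => c * g t). split. intros t. apply (IH (fun z => F (vcons t z))); auto.
    apply imp_scal; auto.
Qed.

Lemma iter_mono n : forall F G I J, (forall z, F z <= G z) -> iter_int n F I -> iter_int n G J -> I <= J.
Proof.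
  induction n as [|m IH]; simpl; intros F G I J Hle HF HG.
  - subst; auto.
  - destruct HF as [g [Hg Ig]]. destruct HG as [h [Hh Ih]].
    apply (imp_mono g h); auto. intros t. apply (IH (fun z => F (vcons t z)) (fun z => G (vcons t z))); auto.
Qed.

Lemma iter_unique n F I J : iter_int n F I -> iter_int n F J -> I = J.
Proof. intros. apply Rle_antisym; eapply iter_mono; eauto; intros; lra. Qed.

Lemma iter_minus n F G I J : iter_int n F I -> iter_int n G J -> iter_int n (fun z => F z - G z) (I - J).
Proof.
  intros HF HG. apply (iter_scal n G J (-1)) in HG. assert (K := iter_plus n _ _ _ _ HF HG).
  replace (I - J) with (I + -1 * J) by ring. eapply iter_ext; [|exact K]. intros; simpl; ring.
Qed.

Lemma iter_mono_abs n F G I J : (forall z, Rabs (F z) <= G z) -> iter_int n F I -> iter_int n G J -> Rabs I <= J.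
Proof.
  intros H HF HG. apply Rabs_le. split.
  - assert (K := iter_scal n G J (-1) HG). assert (-1 * J <= I). eapply iter_mono; [|exact K|exact HF].
    intros z; simpl. generalize (H z) (Rle_abs (F z)) (Rle_abs (- F z)); rewrite Rabs_Ropp; lra. lra.
  - eapply iter_mono; [|exact HF|exact HG]. intros z. generalize (H z) (Rle_abs (F z)) (Rle_abs (- F z)); rewrite Rabs_Ropp; lra.
Qed.

Lemma exp_lip a b : 0 <= a -> 0 <= b -> Rabs (exp a - exp b) <= exp (a + b) * Rabs (a - b).
Proof.
  assert (K: forall a b, 0 <= a <= b -> exp b - exp a <= exp (a + b) * (b - a)).
  { intros x y Hxy. set (u := y - x). replace y with (x + u) by (unfold u; ring).
    assert (Hu: 0 <= u) by (unfold u; lra).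
    rewrite exp_plus. replace (x + (x + u)) with (x + (x + u)) by ring.
    assert (exp u - 1 <= u * exp u).
    { generalize (exp_ineq1_le (-u)). rewrite exp_Ropp. intro E. assert (0 < exp u) by apply exp_pos.
      apply (Rmult_le_compat_l (exp u)) in E; [|lra]. rewrite Rinv_r in E by lra. nra. }
    rewrite !exp_plus. assert (0 < exp x) by apply exp_pos. assert (1 <= exp x) by (generalize (exp_ineq1_le x); lra).
    assert (0 < exp u) by apply exp_pos.
    replace (x + u - x) with u by ring.
    assert (exp x * exp u - exp x <= exp x * (u * exp u)) by nra.
    assert (0 <= u * exp u) by nra.
    assert (exp x * (u * exp u) <= exp x * exp x * (u * exp u)).
    { rewrite <- (Rmult_1_l (u * exp u)) at 1. rewrite Rmult_assoc. apply Rmult_le_compat_l. lra.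
      apply Rmult_le_compat_r; lra. }
    replace (exp x * (exp x * exp u) * u) with (exp x * exp x * (u * exp u)) by ring. lra. }
  intros Ha Hb. destruct (Rle_dec a b).
  - rewrite Rabs_left1. rewrite Rabs_left1 by lra. replace (- (a - b)) with (b - a) by ring.
    replace (- (exp a - exp b)) with (exp b - exp a) by ring. apply K; lra.
    assert (exp a <= exp b) by (apply exp_le; lra). lra.
  - rewrite Rabs_right. rewrite Rabs_right by lra. rewrite Rplus_comm. apply K; lra.
    assert (exp b <= exp a) by (apply exp_le; lra). lra.
Qed.

Definition inclass n C K (f : (nat -> R) -> R) :=
  (forall z, Rabs (f z) <= C * exp (K * Sn n z)) /\
  (forall z z', Rabs (f z - f z') <= C * exp (K * (Sn n z + Sn n z')) * dist n z z').

Lemma expS_inclass m K : 0 <= K -> inclass m (1 + 2*K) (2*K) (fun z => exp (2 * K * Sn m z)).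
Proof.
  intros HK. split.
  - intros z. rewrite Rabs_right by (apply Rle_ge, Rlt_le, exp_pos).
    assert (0 < exp (2*K*Sn m z)) by apply exp_pos. nra.
  - intros z z'. eapply Rle_trans. apply exp_lip.
    apply Rmult_le_pos; [lra|apply Sn_nonneg]. apply Rmult_le_pos; [lra|apply Sn_nonneg].
    replace (2 * K * Sn m z + 2 * K * Sn m z') with (2 * K * (Sn m z + Sn m z')) by ring.
    replace (2 * K * Sn m z - 2 * K * Sn m z') with (2 * K * (Sn m z - Sn m z')) by ring.
    rewrite Rabs_mult, (Rabs_right (2*K)) by lra.
    assert (E := Sn_lip m z z'). assert (0 < exp (2 * K * (Sn m z + Sn m z'))) by apply exp_pos.
    assert (0 <= Rabs (Sn m z - Sn m z')) by apply Rabs_pos.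
    assert (0 <= dist m z z') by apply dist_nonneg.
    apply Rle_trans with (exp (2 * K * (Sn m z + Sn m z')) * (2 * K * dist m z z')).
    apply Rmult_le_compat_l. lra. apply Rmult_le_compat_l; lra. nra.
Qed.

Definition zero_v : nat -> R := fun _ => 0.

Theorem exist_class n : forall K, 0 <= K -> exists M, 0 <= M /\ forall C f, 0 <= C -> inclass n C K f ->
  exists I, iter_int n (fun z => f z * Dens n z) I /\ Rabs I <= C * M.
Proof.
  induction n as [|m IH]; intros K HK.
  - exists 1. split. lra. intros C f HC [Hb _]. exists (f (fun _ => 0) * Dens 0 (fun _ => 0)).
    split. simpl. reflexivity. unfold Dens, std_gauss_density; simpl. rewrite Rmult_1_r.
    eapply Rle_trans. apply Hb. unfold Sn; simpl. rewrite Rmult_0_r, exp_0. lra.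
  - destruct (IH K HK) as [M1 [HM1 H1]]. destruct (IH (2*K) ltac:(lra)) as [M2 [HM2 H2]].
    set (E0 := exp ((2*K+1)^2/2)). assert (HE0: 0 < E0) by apply exp_pos.
    exists (2 * (M1 * E0)). split. nra.
    intros C f HC [Hb Hl].
    assert (Sec: forall t, inclass m (C * exp (2 * K * Rabs t)) K (fun z => f (vcons t z))).
    { intros t. assert (HT: 0 <= Rabs t) by apply Rabs_pos. split.
      - intros z. eapply Rle_trans. apply Hb. rewrite Sn_vcons.
        rewrite Rmult_assoc, <- exp_plus. apply Rmult_le_compat_l; auto. apply exp_le. nra.
      - intros z z'. eapply Rle_trans. apply Hl. rewrite !Sn_vcons, dist_vcons.
        replace (t - t) with 0 by ring. rewrite Rabs_R0, Rplus_0_l.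
        apply Rmult_le_compat_r. apply dist_nonneg.
        rewrite Rmult_assoc, <- exp_plus. apply Rmult_le_compat_l; auto. apply exp_le. right; ring. }
    assert (Ex: forall t, exists I, iter_int m (fun z => f (vcons t z) * Dens m z) I /\
                  Rabs I <= C * exp (2 * K * Rabs t) * M1).
    { intros t. apply H1. assert (0 < exp (2 * K * Rabs t)) by apply exp_pos. nra. apply Sec. }
    set (h := fun t => proj1_sig (constructive_indefinite_description _ (Ex t))).
    assert (Hh: forall t, iter_int m (fun z => f (vcons t z) * Dens m z) (h t) /\
                  Rabs (h t) <= C * exp (2 * K * Rabs t) * M1).
    { intros t. unfold h. destruct (constructive_indefinite_description _ (Ex t)); simpl; auto. }
    destruct (H2 (1 + 2*K) (fun z => exp (2 * K * Sn m z)) ltac:(lra) (expS_inclass m K HK)) as [IB [HIB HIBb]].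
    assert (Lip1: forall t t', h t - h t' <= C * exp (K * (Rabs t + Rabs t')) * Rabs (t - t') * IB).
    { intros t t'. set (c := C * exp (K * (Rabs t + Rabs t')) * Rabs (t - t')).
      assert (A := iter_minus m _ _ _ _ (proj1 (Hh t)) (proj1 (Hh t'))).
      assert (B := iter_scal m _ _ c HIB).
      eapply iter_mono; [|exact A|exact B]. intros z. simpl.
      assert (Dp := Dens_pos m z).
      assert (L := Hl (vcons t z) (vcons t' z)). rewrite !Sn_vcons, dist_vcons in L.
      unfold dist in L. rewrite (rsum_ext m _ (fun _ => 0)) in L by (intros; rewrite Rminus_diag, Rabs_R0; auto).
      assert (Z: rsum m (fun _ => 0) = 0) by (clear; induction m; simpl; auto; rewrite IHm; ring).
      rewrite Z, Rplus_0_r in L.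
      replace (f (vcons t z) * Dens m z - f (vcons t' z) * Dens m z) with ((f (vcons t z) - f (vcons t' z)) * Dens m z) by ring.
      replace (c * (exp (2 * K * Sn m z) * Dens m z)) with ((c * exp (2 * K * Sn m z)) * Dens m z) by ring.
      apply Rmult_le_compat_r. lra. eapply Rle_trans. apply Rle_abs. eapply Rle_trans. apply L.
      unfold c. rewrite !Rmult_assoc. apply Rmult_le_compat_l; auto.
      replace (exp (K * (Rabs t + Rabs t')) * (Rabs (t - t') * exp (2 * (K * Sn m z)))) with
        (exp (K * (Rabs t + Sn m z + (Rabs t' + Sn m z))) * Rabs (t - t')). lra.
      rewrite (Rmult_comm (Rabs _)), <- Rmult_assoc, <- exp_plus. f_equal. f_equal. ring. }
    assert (LipH: forall t t', Rabs (h t - h t') <= (C * (1 + 2*K) * M2) * exp (K * (Rabs t + Rabs t')) * Rabs (t - t')).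
    { intros t t'. assert (IBb: IB <= (1 + 2*K) * M2) by (generalize (Rle_abs IB); lra).
      assert (0 <= C * exp (K * (Rabs t + Rabs t')) * Rabs (t - t')).
      { apply Rmult_le_pos. apply Rmult_le_pos; auto. apply Rlt_le, exp_pos. apply Rabs_pos. }
      apply Rabs_le. split.
      - assert (X := Lip1 t' t). rewrite (Rplus_comm (Rabs t')), (Rabs_minus_sym t' t) in X.
        assert (C * exp (K * (Rabs t + Rabs t')) * Rabs (t - t') * IB <=
                C * exp (K * (Rabs t + Rabs t')) * Rabs (t - t') * ((1 + 2*K) * M2)) by (apply Rmult_le_compat_l; auto).
        replace (C * (1 + 2 * K) * M2 * exp (K * (Rabs t + Rabs t')) * Rabs (t - t')) with
          (C * exp (K * (Rabs t + Rabs t')) * Rabs (t - t') * ((1 + 2 * K) * M2)) by ring. lra.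
      - assert (X := Lip1 t t').
        assert (C * exp (K * (Rabs t + Rabs t')) * Rabs (t - t') * IB <=
                C * exp (K * (Rabs t + Rabs t')) * Rabs (t - t') * ((1 + 2*K) * M2)) by (apply Rmult_le_compat_l; auto).
        replace (C * (1 + 2 * K) * M2 * exp (K * (Rabs t + Rabs t')) * Rabs (t - t')) with
          (C * exp (K * (Rabs t + Rabs t')) * Rabs (t - t') * ((1 + 2 * K) * M2)) by ring. lra. }
    assert (Hcont: forall t, continuous h t).
    { apply (cont_of_lip h (C * (1 + 2*K) * M2) K); auto. apply Rmult_le_pos; auto. nra. }
    set (g := fun t => phi t * h t).
    assert (Gc: forall t, continuous g t).
    { intros t. apply (continuous_mult phi h). apply phi_cont. apply Hcont. }
    assert (Gb: forall t, Rabs (g t) <= (C * M1 * E0) * Dm t).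
    { intros t. unfold g. rewrite Rabs_mult, (Rabs_right (phi t)) by (apply Rle_ge, Rlt_le, phi_pos).
      eapply Rle_trans. apply Rmult_le_compat_l. apply Rlt_le, phi_pos. apply (proj2 (Hh t)).
      assert (Pb := phi_exp_bound (2*K) t). fold E0 in Pb.
      replace (phi t * (C * exp (2 * K * Rabs t) * M1)) with ((C * M1) * (phi t * exp (2 * K * Rabs t))) by ring.
      apply Rle_trans with ((C*M1) * (E0 * Dm t)). apply Rmult_le_compat_l. nra. exact Pb. right; ring. }
    destruct (imp_exists g _ Gc Gb) as [I [HI HIb]].
    exists I. split.
    + simpl. exists g. split; auto. intros t.
      eapply iter_ext; [|apply (iter_scal m _ _ (phi t) (proj1 (Hh t)))].
      intros z. simpl. rewrite Dens_vcons. ring.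
    + lra.
Qed.

Lemma iter_const n : forall c, iter_int n (fun z => c * Dens n z) c.
Proof.
  induction n as [|m IH]; intros c; simpl.
  - unfold Dens, std_gauss_density; simpl. ring.
  - exists (fun t => c * phi t). split.
    + intros t. eapply iter_ext; [|apply (IH (c * phi t))]. intros z; simpl. rewrite Dens_vcons. ring.
    + assert (X := imp_scal _ _ c phi_int). rewrite Rmult_1_r in X. exact X.
Qed.

Lemma iter_lin n : forall a, iter_int n (fun z => rsum n (fun k => a k * z k) * Dens n z) 0.
Proof.
  induction n as [|m IH]; intros a; cbn [iter_int].
  - unfold Dens, std_gauss_density; simpl. ring.
  - exists (fun t => a O * (t * phi t)). split.
    + intros t.
      assert (K := iter_plus m _ _ _ _ (iter_const m (a O * t * phi t)) (iter_scal m _ _ (phi t) (IH (fun k => a (S k))))).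
      replace (a O * (t * phi t)) with (a O * t * phi t + phi t * 0) by ring.
      eapply iter_ext; [|exact K]. intros z; cbv beta. rewrite Dens_vcons. rewrite rsum_S. simpl. ring.
    + assert (X := imp_scal _ _ (a O) tphi_int). rewrite Rmult_0_r in X. exact X.
Qed.

Definition zshift n (z c : nat -> R) : nat -> R := fun i => if (i <? n)%nat then z i + c i else z i.

Lemma zshift_0 z c : zshift 0 z c = z.
Proof. apply functional_extensionality; intros i. unfold zshift. destruct i; reflexivity. Qed.

Lemma zshift_vcons m t z c : zshift (S m) (vcons t z) c = vcons (t + c O) (zshift m z (fun k => c (S k))).
Proof. apply functional_extensionality; intros i. unfold zshift. destruct i; simpl; reflexivity. Qed.

Lemma phi_tilt u c : phi u * exp (c * u) = exp (c^2/2) * phi (u - c).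
Proof.
  assert (E: exp (c^2/2) * exp (-(u-c)^2/2) = exp (-u^2/2) * exp (c*u)) by (rewrite <- !exp_plus; f_equal; field).
  assert (S := sqrt2pi_ge1). unfold phi. transitivity ((exp (c^2/2) * exp (-(u-c)^2/2)) / sqrt (2*PI)). rewrite E. field. lra. field. lra.
Qed.

Theorem cameron_martin n : forall f c I, iter_int n (fun z => f (zshift n z c) * Dens n z) I ->
  iter_int n (fun z => f z * exp (rsum n (fun k => c k * z k)) * Dens n z)
     (exp (rsum n (fun k => c k ^ 2) / 2) * I).
Proof.
  induction n as [|m IH]; intros f c I HF; cbn [iter_int] in *.
  - rewrite zshift_0 in HF. subst. unfold Dens, std_gauss_density; simpl.
    replace (0/2) with 0 by field. rewrite exp_0. ring.
  - destruct HF as [g [Hg Ig]].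
    set (c' := fun k => c (S k)).
    set (K := exp (c O ^ 2 / 2) * exp (rsum m (fun k => c' k ^ 2) / 2)).
    exists (fun u => K * g (u + - c O)). split.
    + intros u. set (t := u + - c O).
      assert (A : iter_int m (fun z => f (vcons (t + c O) (zshift m z c')) * Dens m z) (/ phi t * g t)).
      { eapply iter_ext; [|apply (iter_scal m _ _ (/ phi t) (Hg t))]. intros z; simpl.
        rewrite zshift_vcons, Dens_vcons. fold c'. field. generalize (phi_pos t); lra. }
      replace (t + c O) with u in A by (unfold t; ring).
      assert (B := IH (fun z => f (vcons u z)) c' _ A).
      assert (Cc := iter_scal m _ _ (phi u * exp (c O * u)) B).
      eapply iter_ext. 2:{ replace (K * g t) with (phi u * exp (c O * u) * (exp (rsum m (fun k => c' k ^ 2) / 2) * (/ phi t * g t))).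
        exact Cc. rewrite phi_tilt. replace (u - c O) with t by (unfold t; ring). unfold K. field.
        generalize (phi_pos t); lra. }
      intros z; cbv beta. rewrite Dens_vcons, rsum_S. simpl. rewrite exp_plus. unfold c'. ring.
    + replace (exp (rsum (S m) (fun k => c k ^ 2) / 2) * I) with (K * I).
      apply imp_scal. apply (imp_shift g I (- c O) Ig).
      unfold K. rewrite rsum_S, <- exp_plus. f_equal. f_equal. unfold c'. field.
Qed.

Lemma vmax_ge n x i : (i < n)%nat -> x i <= vmax n x.
Proof.
  induction n; intros Hi. lia. simpl. destruct (Nat.eq_dec i n).
  - subst. apply Rmax_r.
  - eapply Rle_trans. apply IHn. lia. apply Rmax_l.
Qed.

Lemma vmax_att n x : (1 <= n)%nat -> exists j, (j < n)%nat /\ vmax n x = x j.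
Proof.
  induction n; intros Hn. lia. simpl. destruct n.
  - exists O. split. lia. simpl. unfold Rmax. destruct (Rle_dec (x O) (x O)); auto.
  - destruct (IHn ltac:(lia)) as [j [Hj E]]. unfold Rmax at 1. destruct (Rle_dec (vmax (S n) x) (x (S n))).
    + exists (S n). split; auto.
    + exists j. split. lia. auto.
Qed.

Lemma vmax_lipM n x y M : (1 <= n)%nat -> (forall i, (i < n)%nat -> Rabs (x i - y i) <= M) ->
  Rabs (vmax n x - vmax n y) <= M.
Proof.
  intros Hn HM. destruct (vmax_att n x Hn) as [j [Hj Ej]]. destruct (vmax_att n y Hn) as [k [Hk Ek]].
  assert (Tj := HM j Hj). assert (Tk := HM k Hk).
  assert (G1 := vmax_ge n y j Hj). assert (G2 := vmax_ge n x k Hk).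
  apply Rabs_le. split.
  - rewrite Ej, Ek in *. generalize (Rle_abs (-(x k - y k))). rewrite Rabs_Ropp. lra.
  - rewrite Ej, Ek in *. generalize (Rle_abs (x j - y j)). lra.
Qed.

Lemma rsum_const n c : rsum n (fun _ => c) = INR n * c.
Proof. induction n. simpl. ring. rewrite S_INR. simpl. rewrite IHn. ring. Qed.

Lemma vmax_lip n x y : (1 <= n)%nat -> Rabs (vmax n x - vmax n y) <= rsum n (fun i => Rabs (x i - y i)).
Proof.
  intros Hn. destruct (vmax_att n x Hn) as [j [Hj Ej]]. destruct (vmax_att n y Hn) as [k [Hk Ek]].
  assert (Tj := rsum_term n (fun i => Rabs (x i - y i)) j Hj ltac:(intros; apply Rabs_pos)).
  assert (Tk := rsum_term n (fun i => Rabs (x i - y i)) k Hk ltac:(intros; apply Rabs_pos)).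
  simpl in Tj, Tk. assert (G1 := vmax_ge n y j Hj). assert (G2 := vmax_ge n x k Hk).
  apply Rabs_le. split.
  - rewrite Ej, Ek in *. generalize (Rle_abs (-(x k - y k))). rewrite Rabs_Ropp. lra.
  - rewrite Ej, Ek in *. generalize (Rle_abs (x j - y j)). lra.
Qed.

Definition alpha d (A : nat -> nat -> R) := rsum d (fun i => rsum d (fun k => Rabs (A i k))).
Definition Fb d A (b : nat -> R) (z : nat -> R) := vmax d (fun i => matvec d A z i + b i).

Lemma alpha_nonneg d A : 0 <= alpha d A.
Proof. apply rsum_nonneg. intros. apply rsum_nonneg. intros; apply Rabs_pos. Qed.

Lemma Aik_le d A i k : (i < d)%nat -> (k < d)%nat -> Rabs (A i k) <= alpha d A.
Proof.
  intros Hi Hk. eapply Rle_trans.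
  apply (rsum_term d (fun k => Rabs (A i k)) k Hk). intros; apply Rabs_pos.
  apply (rsum_term d (fun i => rsum d (fun k => Rabs (A i k))) i Hi). intros; apply rsum_nonneg; intros; apply Rabs_pos.
Qed.

Lemma matvec_lip d A z z' i : (i < d)%nat -> Rabs (matvec d A z i - matvec d A z' i) <= alpha d A * dist d z z'.
Proof.
  intros Hi. unfold matvec, dist.
  replace (rsum d (fun k => A i k * z k) - rsum d (fun k => A i k * z' k)) with (rsum d (fun k => A i k * (z k - z' k))).
  - eapply Rle_trans. apply rsum_abs. rewrite <- rsum_scal. apply rsum_le. intros k Hk.
    rewrite Rabs_mult. apply Rmult_le_compat_r. apply Rabs_pos. apply Aik_le; auto.
  - assert (E: rsum d (fun k => A i k * (z k - z' k)) = rsum d (fun k => A i k * z k) + -1 * rsum d (fun k => A i k * z' k)).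
    { rewrite <- rsum_scal, <- rsum_plus. apply rsum_ext; intros; ring. }
    rewrite E. ring.
Qed.

Lemma matvec_bd d A z i : (i < d)%nat -> Rabs (matvec d A z i) <= alpha d A * Sn d z.
Proof.
  intros Hi. unfold matvec, Sn. eapply Rle_trans. apply rsum_abs. rewrite <- rsum_scal. apply rsum_le. intros k Hk.
  rewrite Rabs_mult. apply Rmult_le_compat_r. apply Rabs_pos. apply Aik_le; auto.
Qed.

Lemma one_plus_le_exp x : 1 + x <= exp x.
Proof. apply exp_ineq1_le. Qed.

Lemma Fb_class d A b : (1 <= d)%nat ->
  inclass d (alpha d A + rsum d (fun i => Rabs (b i))) 1 (Fb d A b).
Proof.
  intros Hd. assert (Ha := alpha_nonneg d A).
  assert (Hbb: 0 <= rsum d (fun i => Rabs (b i))) by (apply rsum_nonneg; intros; apply Rabs_pos).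
  split.
  - intros z. unfold Fb. destruct (vmax_att d (fun i => matvec d A z i + b i) Hd) as [j [Hj E]]. rewrite E.
    eapply Rle_trans. apply Rabs_triang.
    assert (B1 := matvec_bd d A z j Hj).
    assert (B2 := rsum_term d (fun i => Rabs (b i)) j Hj ltac:(intros; apply Rabs_pos)). simpl in B2.
    assert (S0 := Sn_nonneg d z). assert (Ex := one_plus_le_exp (Sn d z)). rewrite Rmult_1_l.
    assert (alpha d A * Sn d z + rsum d (fun i => Rabs (b i)) <= (alpha d A + rsum d (fun i => Rabs (b i))) * (1 + Sn d z)) by nra.
    assert (0 <= alpha d A + rsum d (fun i => Rabs (b i))) by lra.
    assert ((alpha d A + rsum d (fun i => Rabs (b i))) * (1 + Sn d z) <= (alpha d A + rsum d (fun i => Rabs (b i))) * exp (Sn d z))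
      by (apply Rmult_le_compat_l; auto). lra.
  - intros z z'. unfold Fb. apply vmax_lipM; auto. intros i Hi.
    replace (matvec d A z i + b i - (matvec d A z' i + b i)) with (matvec d A z i - matvec d A z' i) by ring.
    eapply Rle_trans. apply matvec_lip; auto.
    assert (0 <= dist d z z') by apply dist_nonneg.
    assert (1 <= exp (1 * (Sn d z + Sn d z'))).
    { generalize (one_plus_le_exp (1 * (Sn d z + Sn d z'))) (Sn_nonneg d z) (Sn_nonneg d z'). lra. }
    assert (alpha d A <= (alpha d A + rsum d (fun i => Rabs (b i))) * exp (1 * (Sn d z + Sn d z'))) by nra.
    apply Rmult_le_compat_r; auto.
Qed.

Lemma sq_class n C (F : (nat -> R) -> R) : 0 <= C -> inclass n C 1 F ->
  inclass n (2 * C * C) 2 (fun z => F z ^ 2).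
Proof.
  intros HC [Hb Hl]. split.
  - intros z. rewrite <- RPow_abs. assert (B := Hb z). assert (0 <= Rabs (F z)) by apply Rabs_pos.
    rewrite Rmult_1_l in B. replace (2 * Sn n z) with (Sn n z + Sn n z) by ring. rewrite exp_plus.
    assert (0 < exp (Sn n z)) by apply exp_pos. simpl. nra.
  - intros z z'. replace (F z ^ 2 - F z' ^ 2) with ((F z + F z') * (F z - F z')) by ring.
    rewrite Rabs_mult. assert (B1 := Hb z). assert (B2 := Hb z'). assert (L := Hl z z').
    rewrite Rmult_1_l in B1, B2, L.
    assert (S1 := Sn_nonneg n z). assert (S2 := Sn_nonneg n z').
    assert (E1: exp (Sn n z) <= exp (Sn n z + Sn n z')) by (apply exp_le; lra).
    assert (E2: exp (Sn n z') <= exp (Sn n z + Sn n z')) by (apply exp_le; lra).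
    assert (A: Rabs (F z + F z') <= 2 * C * exp (Sn n z + Sn n z')).
    { eapply Rle_trans. apply Rabs_triang. nra. }
    replace (2 * (Sn n z + Sn n z')) with ((Sn n z + Sn n z') + (Sn n z + Sn n z')) by ring. rewrite exp_plus.
    assert (0 <= Rabs (F z - F z')) by apply Rabs_pos. assert (0 <= Rabs (F z + F z')) by apply Rabs_pos.
    apply Rle_trans with ((2 * C * exp (Sn n z + Sn n z')) * (C * exp (Sn n z + Sn n z') * dist n z z')).
    apply Rmult_le_compat; auto. right; ring.
Qed.

Lemma iter_rsum n N : forall (F : nat -> (nat -> R) -> R) (I : nat -> R),
  (forall i, (i < N)%nat -> iter_int n (F i) (I i)) ->
  iter_int n (fun z => rsum N (fun i => F i z)) (rsum N I).
Proof.
  induction N; intros F I H; simpl.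
  - eapply iter_ext; [|apply (iter_const n 0)]. intros; simpl; ring.
  - apply iter_plus. apply IHN; intros; apply H; lia. apply H; lia.
Qed.

Lemma mgf n a : iter_int n (fun z => exp (rsum n (fun k => a k * z k)) * Dens n z)
                  (exp (rsum n (fun k => a k ^ 2) / 2)).
Proof.
  assert (K := cameron_martin n (fun _ => 1) a 1 (iter_const n 1)).
  rewrite Rmult_1_r in K. eapply iter_ext; [|exact K]. intros; simpl; ring.
Qed.

Lemma key_ineq u L : 2 <= L -> - L / 2 <= u -> u^2 <= 2 * L * (exp u - 1 - u).
Proof.
  intros HL Hu. destruct (Rle_dec (-2) u).
  - assert (E: (1 + u/2)^2 <= exp u).
    { replace u with (u/2 + u/2) at 2 by field. rewrite exp_plus.
      assert (X := one_plus_le_exp (u/2)). simpl. assert (0 <= 1 + u/2) by lra. nra. }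
    assert (u^2 / 4 <= exp u - 1 - u) by (simpl in *; nra).
    assert (0 <= u^2) by apply pow2_ge_0. nra.
  - assert (exp u > 0) by apply exp_pos. simpl. nra.
Qed.

Lemma ln_le' x y : 0 < x -> x <= y -> ln x <= ln y.
Proof. intros Hx [H|H]. left; apply ln_increasing; auto. subst; lra. Qed.

Lemma cosh2 a : 2 <= exp a + exp (- a).
Proof. generalize (one_plus_le_exp a) (one_plus_le_exp (-a)). lra. Qed.

Lemma upper_pointwise d (x : nat -> R) s L m : (1 <= d)%nat -> 0 < s -> s * s = L -> 2 <= L ->
  m = exp L -> ln (2 * INR d) = L / 2 ->
  (vmax d x)^2 <= (L - 2) + (2 / m) * rsum d (fun i => exp (s * x i) + exp (- (s * x i))).
Proof.
  intros Hd Hs HsL HL Hm Hln. set (Y := rsum d (fun i => exp (s * x i) + exp (- (s * x i)))).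
  assert (HY: 2 * INR d <= Y).
  { unfold Y. rewrite Rmult_comm, <- rsum_const. apply rsum_le. intros; apply cosh2. }
  assert (Hdpos: 1 <= INR d) by (apply (le_INR 1); auto).
  assert (Ypos: 0 < Y) by lra.
  assert (lnY: L/2 <= ln Y) by (rewrite <- Hln; apply ln_le'; lra).
  destruct (vmax_att d x Hd) as [j [Hj E]]. rewrite E.
  assert (T: exp (s * Rabs (x j)) <= Y).
  { eapply Rle_trans. 2:{ apply (rsum_term d (fun i => exp (s * x i) + exp (- (s * x i))) j Hj).
      intros k _; generalize (exp_pos (s * x k)) (exp_pos (- (s * x k))); lra. }
    simpl. destruct (Rle_dec 0 (x j)).
    - rewrite Rabs_right by lra. generalize (exp_pos (- (s * x j))); lra.
    - rewrite Rabs_left by lra. replace (s * - x j) with (- (s * x j)) by ring. generalize (exp_pos (s * x j)); lra. }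
  assert (T2: s * Rabs (x j) <= ln Y) by (rewrite <- (ln_exp (s * Rabs (x j))); apply ln_le'; auto; apply exp_pos).
  set (u := ln Y - L).
  assert (K := key_ineq u L HL ltac:(unfold u; lra)).
  assert (Eu: exp u = Y / m).
  { unfold u. unfold Rminus. rewrite exp_plus, exp_Ropp, exp_ln by auto. rewrite Hm. auto. }
  rewrite Eu in K.
  assert (Sq: (s * Rabs (x j))^2 <= (ln Y)^2).
  { assert (0 <= s * Rabs (x j)) by (apply Rmult_le_pos; [lra|apply Rabs_pos]). simpl. nra. }
  assert (Xa: (s * Rabs (x j))^2 = L * x j ^2).
  { rewrite <- HsL. rewrite Rpow_mult_distr. rewrite pow2_abs. ring. }
  assert (Ly: ln Y = L + u) by (unfold u; ring).
  rewrite Ly in Sq. rewrite Xa in Sq.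
  assert (L * x j ^ 2 <= L * ((L - 2) + 2 / m * Y)).
  { eapply Rle_trans. exact Sq. unfold Rdiv in *.
    replace (L * (L - 2 + 2 * / m * Y)) with (L^2 - 2*L + 2 * L * (Y * / m)) by ring. simpl in *. nra. }
  apply (Rmult_le_reg_l L). lra. auto.
Qed.

Theorem mainTheorem16 (d : nat) (V A : nat -> nat -> R) :
  (3 <= d)%nat ->
  correlation_matrix d V ->
  (forall i j, (i < d)%nat -> (j < d)%nat -> V i j = rsum d (fun k => A i k * A j k)) ->
  exists E1 E2 : R,
    gauss_expect d A (fun x => vmax d x) E1 /\
    gauss_expect d A (fun x => (vmax d x)^2) E2 /\
    E2 <= 6 * ln (INR d) /\
    E2 - E1^2 >= / (INR d ^ 15 * sqrt (2 * PI)).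
Proof.
  intros Hd [Hsym [Hpsd Hdiag]] HVA.
  assert (Hd1: (1 <= d)%nat) by lia.
  assert (HdR: 3 <= INR d) by (replace 3 with (INR 3) by (simpl; ring); apply le_INR; auto).
  assert (rown: forall i, (i < d)%nat -> rsum d (fun k => A i k ^ 2) = 1).
  { intros i Hi. rewrite <- (Hdiag i Hi), (HVA i i Hi Hi). apply rsum_ext; intros; ring. }
  set (h := fun z => vmax d (matvec d A z)).
  set (b0 := fun _ : nat => 0).
  assert (hF: forall z, Fb d A b0 z = h z).
  { intros z. unfold Fb, h, b0. f_equal. apply functional_extensionality; intros; ring. }
  set (C0 := alpha d A + rsum d (fun i => Rabs (b0 i))).
  assert (HC0: 0 <= C0).
  { unfold C0. generalize (alpha_nonneg d A) (rsum_nonneg d (fun i => Rabs (b0 i)) ltac:(intros; apply Rabs_pos)). lra. }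
  destruct (exist_class d 1 ltac:(lra)) as [M1 [_ HM1]].
  destruct (HM1 C0 (Fb d A b0) HC0 (Fb_class d A b0 Hd1)) as [E1 [HE1 _]].
  destruct (exist_class d 2 ltac:(lra)) as [M2 [_ HM2]].
  destruct (HM2 (2*C0*C0) (fun z => Fb d A b0 z ^ 2) ltac:(nra) (sq_class d C0 (Fb d A b0) HC0 (Fb_class d A b0 Hd1))) as [E2 [HE2 _]].
  assert (I1: iter_int d (fun z => h z * Dens d z) E1).
  { refine (iter_ext _ _ _ _ _ HE1). intros z; cbv beta; rewrite hF; auto. }
  assert (I2: iter_int d (fun z => h z ^ 2 * Dens d z) E2).
  { refine (iter_ext _ _ _ _ _ HE2). intros z; cbv beta; rewrite hF; auto. }
  exists E1, E2.
  assert (ln2: ln 2 <= 1).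
  { rewrite <- (ln_exp 1). apply ln_le'. lra. generalize (one_plus_le_exp 1); lra. }
  assert (lnd: 1 <= ln (INR d)).
  { rewrite <- (ln_exp 1). apply ln_le'. apply exp_pos. generalize exp_le_3; lra. }
  assert (ln2d: ln (2 * INR d) = ln 2 + ln (INR d)) by (apply ln_mult; lra).
  assert (ln2le: ln 2 <= ln (INR d)) by (apply ln_le'; lra).
  assert (ln2pos: 0 <= ln 2) by (rewrite <- ln_1; apply ln_le'; lra).
  assert (rsX: forall (c : R) (a : nat -> R) z, rsum d (fun k => c * a k * z k) = c * rsum d (fun k => a k * z k)).
  { intros. rewrite <- rsum_scal. apply rsum_ext; intros; ring. }
  assert (mgfA: forall i c, (i < d)%nat ->
     iter_int d (fun z => exp (c * matvec d A z i) * Dens d z) (exp (c^2 / 2))).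
  { intros i c Hi. assert (K := mgf d (fun k => c * A i k)). cbv beta in K.
    replace (rsum d (fun k => (c * A i k) ^ 2)) with (c^2) in K.
    refine (iter_ext _ _ _ _ _ K). intros z; cbv beta. unfold matvec. rewrite rsX. auto.
    replace (c^2) with (c^2 * 1) at 1 by ring. rewrite <- (rown i Hi), <- rsum_scal. apply rsum_ext; intros; ring. }
  assert (UB: E2 <= 2 * ln (2 * INR d)).
  { set (L := 2 * ln (2 * INR d)).
    assert (HL2: 2 <= L) by (unfold L; lra).
    set (s := sqrt L). assert (ss: s * s = L) by (apply sqrt_sqrt; lra).
    assert (s0: 0 < s) by (apply sqrt_lt_R0; lra).
    set (m := exp L).
    assert (Hm: m = 2 * INR d * (2 * INR d)).
    { unfold m, L. replace (2 * ln (2 * INR d)) with (ln (2 * INR d) + ln (2 * INR d)) by ring.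
      rewrite exp_plus, exp_ln by lra. auto. }
    assert (Hln: ln (2 * INR d) = L / 2) by (unfold L; field).
    assert (eL: exp (s^2/2) = 2 * INR d).
    { replace (s^2/2) with (ln (2 * INR d)). apply exp_ln; lra. rewrite Hln. simpl. rewrite Rmult_1_r, ss. auto. }
    assert (Yint: iter_int d (fun z => rsum d (fun i => (exp (s * matvec d A z i) + exp (- (s * matvec d A z i))) * Dens d z))
                    (rsum d (fun _ => 2 * INR d + 2 * INR d))).
    { apply iter_rsum. intros i Hi.
      assert (K := iter_plus d _ _ _ _ (mgfA i s Hi) (mgfA i (-s) Hi)).
      replace ((-s)^2) with (s^2) in K by ring. rewrite eL in K.
      refine (iter_ext _ _ _ _ _ K). intros z; cbv beta. replace (- s * matvec d A z i) with (- (s * matvec d A z i)) by ring. ring. }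
    assert (Bint := iter_plus d _ _ _ _ (iter_const d (L - 2)) (iter_scal d _ _ (2 / m) Yint)).
    assert (Pw: forall z, h z ^ 2 * Dens d z <= (L - 2) * Dens d z +
        2 / m * rsum d (fun i => (exp (s * matvec d A z i) + exp (- (s * matvec d A z i))) * Dens d z)).
    { intros z. assert (U := upper_pointwise d (matvec d A z) s L m Hd1 s0 ss HL2 eq_refl Hln).
      rewrite (rsum_ext d _ (fun i => Dens d z * (exp (s * matvec d A z i) + exp (- (s * matvec d A z i)))))
        by (intros; ring).
      rewrite rsum_scal. assert (Dp := Dens_pos d z). unfold h.
      replace ((L - 2) * Dens d z + 2 / m * (Dens d z * rsum d (fun i => exp (s * matvec d A z i) + exp (- (s * matvec d A z i)))))
        with ((L - 2 + 2 / m * rsum d (fun i => exp (s * matvec d A z i) + exp (- (s * matvec d A z i)))) * Dens d z) by ring.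
      apply Rmult_le_compat_r; lra. }
    assert (Hle := iter_mono d _ _ _ _ Pw I2 Bint).
    rewrite rsum_const, Hm in Hle. fold L.
    replace (L - 2 + 2 / (2 * INR d * (2 * INR d)) * (INR d * (2 * INR d + 2 * INR d))) with L in Hle by (field; lra).
    exact Hle. }
  assert (Var: E2 - E1^2 >= exp (- (sqrt (2 * ln (2 * INR d)) + 1)^2)).
  { set (L := 2 * ln (2 * INR d)) in *.
    assert (HL: 0 <= L) by (unfold L; lra).
    set (s := sqrt L). assert (ss: s * s = L) by (apply sqrt_sqrt; lra).
    assert (s0: 0 <= s) by apply sqrt_pos.
    assert (Q0: iter_int d (fun z => (h z - E1)^2 * Dens d z) (E2 - E1^2)).
    { assert (K := iter_plus d _ _ _ _ I2 (iter_plus d _ _ _ _ (iter_scal d _ _ (-2*E1) I1) (iter_const d (E1^2)))).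
      replace (E2 - E1^2) with (E2 + (-2 * E1 * E1 + E1^2)) by ring.
      refine (iter_ext _ _ _ _ _ K). intros z; cbv beta. ring. }
    assert (V0: 0 <= E2 - E1^2).
    { assert (K := iter_const d 0). eapply iter_mono; [|exact K|exact Q0]. intros z; cbv beta.
      assert (Dp := Dens_pos d z). assert (0 <= (h z - E1)^2) by apply pow2_ge_0. nra. }
    assert (E1s: E1 <= s) by (simpl in V0; nra).
    set (s1 := s + 1).
    assert (H0d: (0 < d)%nat) by lia.
    assert (w1int := mgfA O s1 H0d).
    assert (W2int := mgfA O (2 * s1) H0d).
    set (c := fun k => s1 * A O k).
    set (bvec := matvec d A c).
    set (Cb := alpha d A + rsum d (fun i => Rabs (bvec i))).
    assert (HCb: 0 <= Cb).
    { unfold Cb. generalize (alpha_nonneg d A) (rsum_nonneg d (fun i => Rabs (bvec i)) ltac:(intros; apply Rabs_pos)). lra. }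
    destruct (HM1 Cb (Fb d A bvec) HCb (Fb_class d A bvec Hd1)) as [J [HJ _]].
    assert (Zs: forall z, Fb d A bvec z = h (zshift d z c)).
    { intros z. unfold Fb, h. f_equal. apply functional_extensionality; intros i.
      unfold bvec, matvec. rewrite <- rsum_plus. apply rsum_ext. intros k Hk. unfold zshift.
      rewrite (proj2 (Nat.ltb_lt k d) Hk). ring. }
    assert (HJ' : iter_int d (fun z => h (zshift d z c) * Dens d z) J).
    { refine (iter_ext _ _ _ _ _ HJ). intros z; cbv beta. rewrite Zs. auto. }
    assert (CMr := cameron_martin d h c J HJ').
    assert (rc: rsum d (fun k => c k ^ 2) = s1^2).
    { unfold c. replace (s1^2) with (s1^2 * 1) by ring. rewrite <- (rown O H0d), <- rsum_scal. apply rsum_ext; intros; ring. }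
    rewrite rc in CMr.
    assert (Jge: s1 <= J).
    { assert (K := iter_plus d _ _ _ _ (iter_lin d (A O)) (iter_const d s1)).
      replace s1 with (0 + s1) by ring. eapply iter_mono; [|exact K|exact HJ]. intros z; cbv beta.
      assert (Dp := Dens_pos d z).
      assert (G := vmax_ge d (fun i => matvec d A z i + bvec i) O H0d). simpl in G.
      assert (b0e: bvec O = s1).
      { unfold bvec, matvec, c. transitivity (s1 * rsum d (fun k => A O k ^ 2)).
        rewrite <- rsum_scal; apply rsum_ext; intros; ring. rewrite rown; auto; ring. }
      rewrite b0e in G. unfold Fb. unfold matvec at 1 in G. nra. }
    set (w1 := exp (s1^2/2)) in *. set (W2 := exp ((2*s1)^2/2)) in *.
    set (lam := exp (- (3 * s1^2 / 2))).
    set (kap := lam * w1 - E1).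
    assert (Tot := iter_plus d _ _ _ _ I2 (iter_plus d _ _ _ _ (iter_scal d _ _ (lam^2) W2int)
               (iter_plus d _ _ _ _ (iter_const d (kap^2)) (iter_plus d _ _ _ _ (iter_scal d _ _ (-2*lam) CMr)
               (iter_plus d _ _ _ _ (iter_scal d _ _ (2*kap) I1) (iter_scal d _ _ (-2*lam*kap) w1int)))))).
    assert (Pos: 0 <= E2 + (lam^2 * W2 + (kap^2 + (-2*lam*(w1 * J) + (2*kap*E1 + -2*lam*kap*w1))))).
    { assert (K := iter_const d 0). eapply iter_mono; [|exact K|exact Tot]. intros z; cbv beta.
      assert (Dp := Dens_pos d z).
      assert (rz: rsum d (fun k => c k * z k) = s1 * matvec d A z O) by (unfold c, matvec; apply rsX).
      rewrite rz. replace (2 * s1 * matvec d A z O) with (s1 * matvec d A z O + s1 * matvec d A z O) by ring.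
      rewrite exp_plus.
      set (X := exp (s1 * matvec d A z O)).
      assert (0 <= (h z - lam * X + kap)^2) by apply pow2_ge_0.
      replace (h z ^ 2 * Dens d z + (lam ^ 2 * (X * X * Dens d z) + (kap ^ 2 * Dens d z +
        (-2 * lam * (h z * X * Dens d z) + (2 * kap * (h z * Dens d z) + -2 * lam * kap * (X * Dens d z))))))
        with ((h z - lam * X + kap)^2 * Dens d z) by ring. nra. }
    assert (Alg: E2 + (lam^2 * W2 + (kap^2 + (-2*lam*(w1 * J) + (2*kap*E1 + -2*lam*kap*w1)))) =
                 (E2 - E1^2) + lam^2 * (W2 - w1^2) - 2 * lam * w1 * (J - E1)) by (unfold kap; ring).
    rewrite Alg in Pos.
    assert (lw: lam * w1 = exp (- s1^2)).
    { unfold lam, w1. rewrite <- exp_plus. f_equal. field. }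
    assert (lW: lam^2 * W2 = exp (- s1^2)).
    { replace (lam^2) with (lam * lam) by ring. unfold lam, W2. rewrite <- !exp_plus. f_equal. field. }
    assert (lpos: 0 < lam) by apply exp_pos. assert (wpos: 0 < w1) by apply exp_pos.
    assert (lw2: 0 <= lam^2 * w1^2) by (simpl; nra).
    assert (J - E1 >= 1) by (unfold s1 in Jge; lra).
    assert (2 * lam * w1 * (J - E1) >= 2 * exp (- s1^2)).
    { replace (2 * lam * w1 * (J - E1)) with (2 * (lam * w1) * (J - E1)) by ring. rewrite lw. assert (0 < exp (- s1^2)) by apply exp_pos. nra. }
    replace (- (s + 1)^2) with (- s1^2) by (unfold s1; ring).
    assert (lam ^ 2 * (W2 - w1 ^ 2) = exp (- s1^2) - lam^2 * w1^2) by (rewrite <- lW; ring).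
    lra. }
  split; [exact I1|]. split; [exact I2|]. split.
  - lra.
  - set (L := 2 * ln (2 * INR d)) in *.
    assert (HL: 0 <= L) by (unfold L; lra).
    assert (sq: sqrt L * sqrt L = L) by (apply sqrt_sqrt; auto).
    assert (s0: 0 <= sqrt L) by apply sqrt_pos.
    assert (B: (sqrt L + 1)^2 <= 15 * ln (INR d)).
    { assert ((sqrt L + 1)^2 <= 2 * L + 2) by (generalize (pow2_ge_0 (sqrt L - 1)); simpl; nra). unfold L in *. lra. }
    apply Rle_ge. eapply Rle_trans; [|apply Rge_le; exact Var].
    apply Rle_trans with (exp (- (15 * ln (INR d)))).
    + rewrite exp_Ropp. replace (15 * ln (INR d)) with (ln (INR d ^ 15)).
      rewrite exp_ln by (apply pow_lt; lra).
      assert (P: 0 < INR d ^ 15) by (apply pow_lt; lra).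
      assert (S := sqrt2pi_ge1). apply Rinv_le_contravar. auto.
      rewrite <- (Rmult_1_r (INR d ^ 15)) at 1. apply Rmult_le_compat_l; lra.
      rewrite ln_pow by lra. f_equal. simpl. ring.
    + apply exp_le. lra.
Qed.
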